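(* Let $f:\mathbb{R}^k\to\mathbb{R}$ be a $C^1$ function and fix a constant $0<\alpha<1$. Let $\{x_n\}_{n\ge 0}$ be a sequence in $\mathbb{R}^k$ and $\{\delta_n\}_{n\ge 0}$ a sequence of positive numbers such that for every $n$, $x_{n+1}=x_n-\delta_n\nabla f(x_n)$ and Armijo's condition $f(x_n-\delta_n\nabla f(x_n))-f(x_n)\le -\alpha\delta_n\|\nabla f(x_n)\|^2$ holds. Assume that $\nabla f(x_n)\neq 0$ for all $n$, and that $\{x_n\}$ converges to a point $x_\infty$ which is a non-degenerate critical point of $f$, i.e. $\nabla f(x_\infty)=0$, $f$ is $C^2$ in a neighbourhood of $x_\infty$, and the Hessian $\nabla^2 f(x_\infty)$ is invertible. Then for every $\epsilon>0$ there exists $n_\epsilon$ such that for all $n\ge n_\epsilon$, $$\alpha\delta_n\le \frac12\left(\|\nabla^2 f(x_\infty)\|+\epsilon\right)\left(\|\nabla^2 f(x_\infty)^{-1}\|+\epsilon\right)^2.$$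
   Context: $\|\cdot\|$ denotes the Euclidean norm on vectors and the corresponding operator norm on matrices. *)

(* Defs.v *)
(* R^k is modelled as row vectors 'rV[R]_k. *)
From HB Require Import structures.
From mathcomp Require Import all_boot all_order all_algebra.
From mathcomp Require Import all_classical all_reals all_analysis.
Set Implicit Arguments. Unset Strict Implicit. Unset Printing Implicit Defensive.
Import Order.TTheory GRing.Theory Num.Theory.
Import numFieldNormedType.Exports.
Local Open Scope classical_set_scope.
Local Open Scope ring_scope.

Definition enorm {R : realType} {k : nat} (v : 'rV[R]_k) : R :=
  Num.sqrt (\sum_(i < k) v ord0 i ^+ 2).

(* operator norm of a k x k matrix (acting on column vectors) w.r.t. the
   Euclidean norm *)
Definition opnorm {R : realType} {k : nat} (A : 'M[R]_k) : R :=
  sup [set r | exists v : 'rV[R]_k, enorm v <= 1 /\ r = enorm (v *m A^T)].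

Definition ebasis {R : realType} {k : nat} (i : 'I_k) : 'rV[R]_k :=
  \row_j (if j == i then 1 else 0).

Definition grad {R : realType} {k : nat} (f : 'rV[R]_k -> R) (x : 'rV[R]_k)
  : 'rV[R]_k := \row_i ('D_(ebasis i) f x).

Definition hessian {R : realType} {k : nat} (f : 'rV[R]_k -> R) (x : 'rV[R]_k)
  : 'M[R]_k := \matrix_(i, j) ('D_(ebasis j) (fun y => grad f y ord0 i) x).

Definition C1 {R : realType} {k : nat} (f : 'rV[R]_k -> R) : Prop :=
  (forall x, differentiable f x) /\ continuous (grad f).

Definition C2_near {R : realType} {k : nat} (f : 'rV[R]_k -> R) (x0 : 'rV[R]_k)
  : Prop :=
  exists2 e : R, 0 < e &
    forall y, ball x0 e y ->
      differentiable f y /\ differentiable (grad f) y /\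
      {for y, continuous (hessian f)}.

(* Main.v *)
Require Import Defs.
From HB Require Import structures.
From mathcomp Require Import all_boot all_order all_algebra.
From mathcomp Require Import all_classical all_reals all_analysis.
From mathcomp Require Import ring lra.
Import Order.TTheory GRing.Theory Num.Theory.
Import numFieldNormedType.Exports.
Local Open Scope classical_set_scope.
Local Open Scope ring_scope.
Section Basic.
Context {R : realType} {k : nat}.
Implicit Types u v w : 'rV[R]_k.

Definition dot u v : R := \sum_(i < k) u ord0 i * v ord0 i.

Lemma sumsq_ge0 u : 0 <= \sum_(i < k) u ord0 i ^+ 2.
Proof. by apply: sumr_ge0 => i _; rewrite sqr_ge0. Qed.

Lemma enorm_ge0 u : 0 <= enorm u.
Proof. exact: sqrtr_ge0. Qed.

Lemma enorm_sq u : enorm u ^+ 2 = \sum_(i < k) u ord0 i ^+ 2.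
Proof. by rewrite /enorm sqr_sqrtr // sumsq_ge0. Qed.

Lemma enorm_le u c : 0 <= c -> \sum_(i < k) u ord0 i ^+ 2 <= c ^+ 2 -> enorm u <= c.
Proof.
move=> c0 h; rewrite -(ger0_norm c0) -sqrtr_sqr; exact: ler_wsqrtr.
Qed.

Lemma CS2 u v : dot u v ^+ 2 <= enorm u ^+ 2 * enorm v ^+ 2.
Proof.
rewrite !enorm_sq; set a := \sum_i _; set b := \sum_i _; set c := dot u v.
have a0 : 0 <= a by exact: sumsq_ge0.
have key : 0 <= \sum_(i < k) (a * v ord0 i - c * u ord0 i) ^+ 2.
  by apply: sumr_ge0 => i _; rewrite sqr_ge0.
have E : \sum_(i < k) (a * v ord0 i - c * u ord0 i) ^+ 2 = a * (a * b - c ^+ 2).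
  rewrite (eq_bigr (fun i => a^+2 * v ord0 i ^+ 2 - (2 * a * c) * (u ord0 i * v ord0 i)
     + c ^+2 * u ord0 i ^+ 2)); last by move=> i _; ring.
  rewrite big_split /= big_split /= sumrN -!mulr_sumr /b /c /dot -/a. ring.
rewrite E in key.
case: (ltrgt0P a) => [apos||a0'].
- by move: key; rewrite pmulr_rge0 // subr_ge0 mulrC.
- by move=> /lt_geF; rewrite a0.
- have u0 : forall i, u ord0 i = 0.
    move=> i; apply/eqP; rewrite -sqrf_eq0; apply/eqP.
    move/eqP: a0'; rewrite psumr_eq0 => [/allP H|j _]; last exact: sqr_ge0.
    by apply/eqP; apply: (H i); rewrite mem_index_enum.
  have -> : c = 0 by rewrite /c /dot big1 // => i _; rewrite u0 mul0r.
  by rewrite expr0n /= a0' mul0r.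
Qed.

Lemma CS u v : dot u v <= enorm u * enorm v.
Proof.
have := CS2 u v; rewrite -exprMn => h.
have : `|dot u v| <= enorm u * enorm v.
  rewrite -ler_sqr ?nnegrE // ?mulr_ge0 ?enorm_ge0 //; by rewrite real_normK ?num_real.
exact: le_trans (ler_norm _).
Qed.

Lemma dotC u v : dot u v = dot v u.
Proof. by apply: eq_bigr => i _; rewrite mulrC. Qed.

Lemma enormZ (c : R) u : enorm (c *: u) = `|c| * enorm u.
Proof.
rewrite /enorm -sqrtr_sqr -sqrtrM ?sqr_ge0 //; congr Num.sqrt.
by rewrite mulr_sumr; apply: eq_bigr => i _; rewrite mxE exprMn.
Qed.

Lemma enorm0 : enorm (0 : 'rV[R]_k) = 0.
Proof. by rewrite -(scale0r 0) enormZ normr0 mul0r. Qed.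

Lemma enormN u : enorm (- u) = enorm u.
Proof. by rewrite -scaleN1r enormZ normrN normr1 mul1r. Qed.

Lemma enormD u v : enorm (u + v) <= enorm u + enorm v.
Proof.
apply: enorm_le; first by rewrite addr_ge0 ?enorm_ge0.
have -> : \sum_(i < k) (u + v) ord0 i ^+ 2 = enorm u ^+ 2 + 2 * dot u v + enorm v ^+ 2.
  rewrite !enorm_sq /dot mulr_sumr -!big_split /=; apply: eq_bigr => i _.
  rewrite !mxE; ring.
have := CS u v; move: (enorm u) (enorm v) => a b h. 
rewrite sqrrD; lra.
Qed.

Lemma enormB u v : enorm (u - v) <= enorm u + enorm v.
Proof. by rewrite -(enormN v); exact: enormD. Qed.

Lemma entry_le u i : `|u ord0 i| <= enorm u.
Proof.
rewrite -(ger0_norm (enorm_ge0 u)) -ler_sqr ?nnegrE // ?normr_ge0 //.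
rewrite !real_normK ?num_real // enorm_sq (bigD1 i) //= lerDl.
by apply: sumr_ge0 => j _; rewrite sqr_ge0.
Qed.

Lemma enorm_gt0 u : u != 0 -> 0 < enorm u.
Proof.
move=> /eqP u0; rewrite lt_neqAle enorm_ge0 andbT; apply/eqP => h; apply: u0.
apply/rowP => i; rewrite [RHS]mxE; apply/eqP; rewrite -normr_le0. idtac.
by rewrite h; exact: entry_le.
Qed.

Lemma mxnorm_le_enorm u : `|u| <= enorm u.
Proof.
rewrite [leLHS]/Num.Def.normr/= mx_normrE; apply: bigmax_le => [|[i j] _].
  exact: enorm_ge0.
by rewrite /= (ord1 i); exact: entry_le.
Qed.

Lemma entry_le_mxnorm u i : `|u ord0 i| <= `|u|.
Proof.
rewrite [leRHS]/Num.Def.normr/= mx_normrE.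
exact: (le_bigmax _ (fun ij : 'I_1 * 'I_k => `|u ij.1 ij.2|) (ord0, i)).
Qed.

Lemma enorm_le_mxnorm u : enorm u <= k%:R * `|u|.
Proof.
apply: enorm_le; first by rewrite mulr_ge0 ?normr_ge0.
apply: (@le_trans _ _ (\sum_(i < k) `|u| ^+ 2)).
  apply: ler_sum => i _; rewrite -real_normK ?num_real //.
  by rewrite lerXn2r ?nnegrE ?normr_ge0 // entry_le_mxnorm.
rewrite sumr_const card_ord -[`|u| ^+ 2 *+ k]mulr_natr exprMn [in leRHS]mulrC.
apply: ler_wpM2l; first exact: sqr_ge0.
case: k => [|n]; first by rewrite expr0n.
by rewrite expr2 ler_peMl ?ler1n // ler0n.
Qed.

Lemma opnorm_ub (M : 'M[R]_k) u : enorm (u *m M^T) <= opnorm M * enorm u.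
Proof.
pose S := [set r | exists v : 'rV[R]_k, enorm v <= 1 /\ r = enorm (v *m M^T)].
pose C := Num.sqrt (\sum_(i < k) enorm (row i M) ^+ 2).
have bnd : forall v, enorm (v *m M^T) <= C * enorm v.
  move=> v; apply: enorm_le; first by rewrite mulr_ge0 ?enorm_ge0 ?sqrtr_ge0.
  rewrite exprMn sqr_sqrtr; last by apply: sumr_ge0 => i _; rewrite sqr_ge0.
  rewrite mulr_suml; apply: ler_sum => i _.
  have -> : (v *m M^T) ord0 i = dot v (row i M).
    by rewrite mxE; apply: eq_bigr => j _; rewrite !mxE.
  by rewrite mulrC; exact: CS2.
have ubS : has_ubound S.
  exists C => r [v [v1 ->]]; apply: (le_trans (bnd v)).
  by rewrite ler_piMr ?sqrtr_ge0.
have [->|u0] := eqVneq u 0.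
  by rewrite mul0mx enorm0 mulr0.
have nu : 0 < enorm u by exact: enorm_gt0.
pose w := (enorm u)^-1 *: u.
have Sw : S (enorm (w *m M^T)).
  exists w; split => //; rewrite enormZ ger0_norm ?invr_ge0 ?enorm_ge0 //.
  by rewrite mulVf ?gt_eqF.
have := ub_le_sup ubS Sw; rewrite -/(opnorm M) -scalemxAl enormZ.
rewrite ger0_norm ?invr_ge0 ?enorm_ge0 // ler_pdivrMl //.
by rewrite mulrC.
Qed.

Lemma opnorm_ge0 (M : 'M[R]_k) : 0 <= opnorm M.
Proof.
pose S := [set r | exists v : 'rV[R]_k, enorm v <= 1 /\ r = enorm (v *m M^T)].
pose C := Num.sqrt (\sum_(i < k) enorm (row i M) ^+ 2).
have ubS : has_ubound S.
  exists C => r [v [v1 ->]]; apply: enorm_le; first by rewrite sqrtr_ge0.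
  rewrite sqr_sqrtr; last by apply: sumr_ge0 => i _; rewrite sqr_ge0.
  apply: ler_sum => i _.
  have -> : (v *m M^T) ord0 i = dot v (row i M).
    by rewrite mxE; apply: eq_bigr => j _; rewrite !mxE.
  apply: le_trans (CS2 _ _) _; rewrite ler_piMl ?sqr_ge0 //.
  have := enorm_ge0 v; move: (enorm v) v1 => e e1 e0; nra.
have S0 : S 0 by exists 0; rewrite enorm0 mul0mx enorm0.
exact: (ub_le_sup ubS S0).
Qed.


Lemma diff_small (G : 'rV[R]_k -> 'rV[R]_k) x0 eta : differentiable G x0 -> 0 < eta ->
  exists2 rho, 0 < rho & forall h, enorm h < rho ->
    enorm (G (h + x0) - G x0 - 'd G x0 h) <= eta * enorm h.
Proof.
move=> dG eta0.
have := diff_locally dG => /eqaddoP H.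
have e0 : 0 < eta / (k%:R + 1) by rewrite divr_gt0 // ltr_wpDl.
have := H _ e0 => /nbhs_norm0P [rho rho0 Hr].
exists rho => // h hr.
have hr' : `|h| < rho by apply: le_lt_trans (mxnorm_le_enorm h) hr.
have := Hr h hr' => /=. 
rewrite !fctE /= => Hh.
have E : G (h + x0) - G x0 - 'd G x0 h = (G \o shift x0) h - (cst (G x0) h + 'd G x0 h).
  by rewrite /= opprD addrA.
rewrite E; apply: le_trans (enorm_le_mxnorm _) _.
apply: le_trans (ler_wpM2l (ler0n _ _) Hh) _.
rewrite mulrA; apply: ler_pM; rewrite ?mulr_ge0 ?divr_ge0 ?ler0n ?addr_ge0 //.
- exact: ltW.
- rewrite mulrA ler_pdivrMr ?ltr_wpDl // mulrDr mulr1 [eta * _]mulrC lerDl; exact: ltW.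
- exact: mxnorm_le_enorm.
Qed.


Lemma row_decomp (v : 'rV[R]_k) : v = \sum_(i < k) v ord0 i *: ebasis i.
Proof.
apply/rowP => j; rewrite summxE (bigD1 j) //= big1 ?addr0.
  by rewrite !mxE eqxx mulr1.
by move=> i ij; rewrite !mxE eq_sym (negbTE ij) mulr0.
Qed.

Lemma dir_grad (f : 'rV[R]_k -> R) y v : differentiable f y ->
  'D_v f y = dot (grad f y) v.
Proof.
move=> df; rewrite deriveE // {1}(row_decomp v) linear_sum /dot.
apply: eq_bigr => i _; rewrite linearZ /= -deriveE // /grad mxE mulrC.
by [].
Qed.

Lemma diff_grad_hess (f : 'rV[R]_k -> R) x0 h : differentiable (grad f) x0 ->
  'd (grad f) x0 h = h *m (hessian f x0)^T.
Proof.
move=> dG; rewrite {1}(row_decomp h) linear_sum.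
apply/rowP => i; rewrite summxE mxE; apply: eq_bigr => j _.
rewrite linearZ /= -deriveE // derive_mx; last exact: diff_derivable.
by rewrite !mxE.
Qed.


Lemma line_derive (f : 'rV[R]_k -> R) x0 v t :
  'D_1 (fun s : R => f (s *: v + x0)) t = 'D_v f (t *: v + x0) /\
  (derivable (fun s : R => f (s *: v + x0)) t 1 <-> derivable f (t *: v + x0) v).
Proof.
have E : (fun h : R => h^-1 *: (((fun s : R => f (s *: v + x0)) \o shift t) (h *: 1)
              - f (t *: v + x0)))
       = (fun h : R => h^-1 *: ((f \o shift (t *: v + x0)) (h *: v) - f (t *: v + x0))).
  apply: funext => h /=; congr (_ *: (f _ - _)).
  by rewrite [h *: 1]mulr1 scalerDl addrA.
by rewrite /derive /derivable /= E.
Qed.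

Lemma seg_bound (f : 'rV[R]_k -> R) x0 v c :
  (forall y, differentiable f y) ->
  (forall s, 0 <= s -> s <= 1 -> enorm (grad f (s *: v + x0)) <= c * s * enorm v) ->
  f (v + x0) - f x0 <= c / 2 * enorm v ^+ 2.
Proof.
move=> df hb.
pose K := c / 2 * enorm v ^+ 2.
pose g := fun s : R => f (s *: v + x0).
pose p := K \*: (@GRing.exp R ^~ 2).
pose phi := g - p.
have dg t : derivable g t 1.
  by apply/(line_derive f x0 v t).2; exact: diff_derivable.
have dp t : derivable p t 1 by apply: derivableZ; exact: exprn_derivable.
have dphi t : derivable phi t 1 by exact: derivableB.
have cphi : {within [set` `[0, 1]%R], continuous phi}.
  by apply: derivable_within_continuous => t _; exact: dphi.
have neg : forall t, t \in `]0, 1[%R -> derive1 phi t <= 0.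
  move=> t; rewrite in_itv /= => /andP [t0 t1].
  rewrite derive1E deriveB // (line_derive f x0 v t).1 deriveZ; last exact: exprn_derivable.
  rewrite exp_derive dir_grad //.
  have := CS (grad f (t *: v + x0)) v.
  have := hb t (ltW t0) (ltW t1).
  have := enorm_ge0 v.
  rewrite /K /= expr1 [_ *: 1]mulr1 /GRing.scale /=.
  move: (dot _ _) (enorm (grad _ _)) (enorm v) => a b e e0 h1 h2.
  have h3 : b * e <= c * t * e * e by nra.
  rewrite subr_le0.
  suff -> : c / 2 * e ^+ 2 * (2%:R * t) = c * t * e * e by lra.
  by field.
have := ler0_derive1_le_cc (fun t _ => dphi t) neg cphi.
move=> /(_ 1 0); rewrite !in_itv /= ler01 !lexx /= => /(_ isT isT isT).
rewrite /phi /g /p /= !fctE /= scale1r scale0r add0r.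
rewrite expr0n /= expr1n /GRing.scale /= mulr0 mulr1 subr0 => H.
rewrite -/K; lra.
Qed.

End Basic.

Theorem theorem1 (R : realType) (k : nat) (f : 'rV[R]_k -> R) (alpha : R)
  (x : nat -> 'rV[R]_k) (delta : nat -> R) (xinf : 'rV[R]_k) :
  C1 f -> 0 < alpha -> alpha < 1 ->
  (forall n, 0 < delta n) ->
  (forall n, x n.+1 = x n - delta n *: grad f (x n)) ->
  (forall n, f (x n - delta n *: grad f (x n)) - f (x n)
             <= - (alpha * delta n * enorm (grad f (x n)) ^+ 2)) ->
  (forall n, grad f (x n) != 0) ->
  x @ \oo --> xinf ->
  grad f xinf = 0 -> C2_near f xinf -> hessian f xinf \in unitmx ->
  forall eps : R, 0 < eps -> exists N : nat, forall n : nat, (N <= n)%N ->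
    alpha * delta n <=
      2^-1 * (opnorm (hessian f xinf) + eps)
           * (opnorm (invmx (hessian f xinf)) + eps) ^+ 2.
Proof.
move=> [df _] a0 a1 d0 xS arm gn0 xcv g0 [e0 e0pos hC2] Hunit eps eps0.
set H := hessian f xinf; set A := opnorm H; set B := opnorm (invmx H).
have A0 : 0 <= A by exact: opnorm_ge0.
have B0 : 0 <= B by exact: opnorm_ge0.
have dG : differentiable (grad f) xinf by have [_ []] := hC2 xinf (ballxx _ e0pos).
pose eta := eps / ((B + 1) * (B + eps) + 1).
have den0 : 0 < (B + 1) * (B + eps) + 1.
  by rewrite ltr_wpDl // mulr_ge0 // addr_ge0 // ltW.
have eta0 : 0 < eta by rewrite divr_gt0.
have etaeps : eta <= eps.
  by rewrite ler_pdivrMr // ler_peMr ?(ltW eps0) // lerDr mulr_ge0 // addr_ge0 // ltW.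
have etaB : B * eta * (B + eps) <= eps.
  rewrite /eta.
  have -> : B * (eps / ((B + 1) * (B + eps) + 1)) * (B + eps)
      = B * (B + eps) * eps / ((B + 1) * (B + eps) + 1).
    by field; rewrite gt_eqF.
  rewrite ler_pdivrMr // [X in _ <= X]mulrC ler_pM2r //.
  have : 0 <= B * (B + eps) by rewrite mulr_ge0 // addr_ge0 // ltW.
  have : 0 <= B + eps by rewrite addr_ge0 // ltW.
  nra.
have [rho rho0 Hrho] := diff_small _ _ _ dG eta0.
have gapprox : forall h, enorm h < rho ->
    enorm (grad f (h + xinf) - h *m H^T) <= eta * enorm h.
  move=> h hr; have := Hrho h hr.
  by rewrite g0 subr0 diff_grad_hess.
have fbound : forall v, enorm v < rho -> f (v + xinf) - f xinf <= (A + eta) / 2 * enorm v ^+ 2.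
  move=> v vr; apply: seg_bound => // s s0 s1.
  have hs : enorm (s *: v) = s * enorm v by rewrite enormZ ger0_norm.
  have hr : enorm (s *: v) < rho.
    rewrite hs; apply: le_lt_trans vr; rewrite ler_piMl ?enorm_ge0 //.
  have := gapprox _ hr.
  have := opnorm_ub H (s *: v).
  have := enormD (grad f (s *: v + xinf) - (s *: v) *m H^T) ((s *: v) *m H^T).
  rewrite subrK hs -/A.
  have : 0 <= s * enorm v by rewrite mulr_ge0 ?enorm_ge0.
  rewrite -mulrA; move: (s * enorm v) => z; nra.
have fdec : forall n, f (x n.+1) <= f (x n).
  move=> n; rewrite xS; have := arm n.
  have : 0 <= alpha * delta n * enorm (grad f (x n)) ^+ 2.
    by rewrite mulr_ge0 ?sqr_ge0 // mulr_ge0 // ltW.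
  lra.
have fcv : (f \o x) @ \oo --> f xinf.
  apply: continuous_cvg => //; exact: differentiable_continuous.
have flow : forall n, f xinf <= f (x n).
  move=> n; have := @nonincreasing_cvgn_ge R (f \o x).
  rewrite (cvg_lim _ fcv) //; apply => //.
    by apply/nonincreasing_seqP => m; exact: fdec.
have rho1 : 0 < rho / (k%:R + 1) by rewrite divr_gt0 // ltr_wpDl.
have := (cvgrPdist_lt _ _).1 xcv _ rho1 => -[N _ HN].
exists N => n Nn.
have close : enorm (x n - xinf) < rho.
  have := HN n Nn; rewrite /= distrC => hn.
  apply: le_lt_trans (enorm_le_mxnorm _) _.
  apply: (@le_lt_trans _ _ ((k%:R + 1) * `|x n - xinf|)).
    by apply: ler_wpM2r; [exact: normr_ge0 | rewrite lerDl].
  by rewrite mulrC -ltr_pdivlMr ?ltr_wpDl.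
set v := x n - xinf; set g := grad f (x n).
have xv : x n = v + xinf by rewrite /v subrK.
set r := g - v *m H^T.
have rb : enorm r <= eta * enorm v by rewrite /r /g xv; exact: gapprox.
have vinv : v = (g - r) *m (invmx H)^T.
  rewrite /r opprB addrC subrK -mulmxA -trmx_mul mulVmx // trmx1 mulmx1 //.
have vb1 : enorm v <= B * (enorm g + enorm r).
  rewrite {1}vinv; apply: le_trans (opnorm_ub _ _) _.
  by apply: ler_wpM2l => //; exact: enormB.
have gpos : 0 < enorm g by apply: enorm_gt0; exact: gn0.
have vpos : 0 <= enorm v by exact: enorm_ge0.
have vb : enorm v <= (B + eps) * enorm g.
  move: (enorm v) (enorm g) (enorm r) vb1 rb gpos vpos => a b rr h1 h2 h3 h4.
  have c1 : B * eta < 1.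
    rewrite ltNge; apply/negP => hc.
    have hBe : 0 <= B + eps by rewrite addr_ge0 // ltW.
    have : 1 * (B + eps) <= B * eta * (B + eps) by apply: ler_wpM2r.
    rewrite mul1r => h9.
    have B00 : B = 0 by apply/le_anti; rewrite B0 andbT; lra.
    by move: hc; rewrite B00 mul0r ler10.
  have h5 : a * (1 - B * eta) <= B * b.
    have : B * rr <= B * (eta * a) by apply: ler_wpM2l.
    nra.
  have h6 : B <= (B + eps) * (1 - B * eta) by nra.
  have h7 : a * (1 - B * eta) <= (B + eps) * b * (1 - B * eta).
    apply: le_trans h5 _; rewrite mulrAC; apply: ler_wpM2r; [exact: ltW | exact: h6].
  by move: h7; rewrite ler_pM2r // subr_gt0.
have step1 : alpha * delta n * enorm g ^+ 2 <= f (x n) - f xinf.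
  have := arm n; rewrite -xS; have := flow n.+1; rewrite -/g; lra.
have step2 : f (x n) - f xinf <= (A + eta) / 2 * enorm v ^+ 2.
  by rewrite xv; exact: fbound.
have step3 : (A + eta) / 2 * enorm v ^+ 2 <= 2^-1 * (A + eps) * (B + eps) ^+ 2 * enorm g ^+ 2.
  have ha2 : enorm v ^+ 2 <= ((B + eps) * enorm g) ^+ 2.
    by rewrite lerXn2r // nnegrE // mulr_ge0 // ?enorm_ge0 // addr_ge0 // ltW.
  have hm : (A + eta) * enorm v ^+ 2 <= (A + eps) * ((B + eps) * enorm g) ^+ 2.
    apply: ler_pM => //; first by rewrite addr_ge0 // ltW.
    - exact: sqr_ge0.
    - by rewrite lerD2l.
  have -> : (A + eta) / 2 * enorm v ^+ 2 = 2^-1 * ((A + eta) * enorm v ^+ 2) by ring.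
  have -> : 2^-1 * (A + eps) * (B + eps) ^+ 2 * enorm g ^+ 2
      = 2^-1 * ((A + eps) * ((B + eps) * enorm g) ^+ 2) by ring.
  by apply: ler_wpM2l => //; rewrite invr_ge0.
have := le_trans step1 (le_trans step2 step3).
by rewrite ler_pM2r // exprn_gt0.
Qed.
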